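(* In the setting described in the context, assume $q$ is a square, let $d=q-\sqrt q+1$ and $t=(q^2+q+1)/d$. Then $t=q+\sqrt q+1$ and $w_u\le 2$ for every $u$. Moreover, for $j=0,1,2$, the number $v_j$ of indices $u\in\{0,\dots,t-1\}$ with $w_u=j$ is $v_0=\frac12(q+\sqrt q)$, $v_1=\sqrt q+1$, $v_2=\frac12(q-\sqrt q)$.
   Context: Let $q=p^h$ with $p$ prime, $h\ge1$. Let $\alpha$ be a primitive element of $\mathbb{F}_{q^3}$; the points of $PG(2,q)$ are the 1-dimensional $\mathbb{F}_q$-subspaces of $\mathbb{F}_{q^3}$, and $P_i$ denotes the point represented by $\alpha^i$, so $PG(2,q)=\{P_0,\dots,P_{q^2+q}\}$. Let $\tau:P_i\mapsto P_{ip\bmod(q^2+q+1)}$ (a collineation) and let $\ell_0$ be a line of $PG(2,q)$ fixed by $\tau$. For a positive divisor $t$ of $q^2+q+1$ and $i=0,\dots,t-1$ let $O_i=\{P_u:u\equiv i\pmod t\}$, and for $u=0,\dots,t-1$ let $w_u=|\ell_0\cap O_u|$. *)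

(* Defs.v *)
From mathcomp Require Import all_boot all_order all_algebra all_field.
Set Implicit Arguments. Unset Strict Implicit. Unset Printing Implicit Defensive.
Import GRing.Theory.
Local Open Scope ring_scope.

(* Elements of the subfield F_q of L are exactly the c with c^q = c. *)
(* A line of PG(2,q), modelled in F_{q^3}: a 2-dimensional F_q-subspace of L,
   i.e. a subset containing 0, closed under addition and under multiplication
   by scalars of F_q, and of cardinality q^2. *)
Definition is_line (L : finFieldType) (q : nat) (S : {set L}) : Prop :=
  [/\ 0 \in S,
      (forall x y, x \in S -> y \in S -> x + y \in S),
      (forall c x, c ^+ q = c -> x \in S -> c * x \in S)
    & #|S| = (q ^ 2)%N].

(* The collineation tau : P_i |-> P_{ip} is induced by the Frobenius x |-> x^p;
   the line S is fixed by tau iff its image under Frobenius is S. *)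
Definition tau_fixed (L : finFieldType) (p : nat) (S : {set L}) : Prop :=
  [set x ^+ p | x in S] = S.

(* w_u = |l cap O_u| = number of i in {0,...,q^2+q} with i = u (mod t)
   and P_i on l, i.e. alpha^i in l. *)
Definition w (L : finFieldType) (q : nat) (alpha : L) (S : {set L}) (t u : nat)
  : nat :=
  #|[set i : 'I_(q ^ 2 + q + 1) | (i %% t == u)%N && (alpha ^+ i \in S)]|.

(* Main.v *)
Require Import Defs.
From mathcomp Require Import all_boot all_order all_algebra all_field zify ring.
Set Implicit Arguments. Unset Strict Implicit. Unset Printing Implicit Defensive.
Import GRing.Theory.
Local Open Scope ring_scope.

Section P8.
Variables (p h q r : nat) (L : finFieldType) (alpha : L) (l : {set L}).
Hypotheses (pp : prime p) (h0 : (0 < h)%N) (qE : q = (p ^ h)%N) (qr : q = (r ^ 2)%N)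
  (cardL : #|L| = (q ^ 3)%N) (prim : ((q ^ 3).-1.-primitive_root alpha)%R)
  (line : is_line q l).

Let N := (q ^ 2 + q + 1)%N.
Let M := ((q ^ 3).-1)%N.

Lemma q_gt1 : (1 < q)%N.
Proof. by rewrite qE -{1}(expn0 p) ltn_exp2l ?prime_gt1. Qed.

Lemma ME : M = (N * (q - 1))%N.
Proof. have := q_gt1; rewrite /M /N => q1; nia. Qed.

Lemma N_gt0 : (0 < N)%N. Proof. by rewrite /N addn1. Qed.

Lemma rpow : exists m, r = (p ^ m)%N.
Proof.
have : (r %| p ^ h)%N by rewrite -qE qr dvdn_mull.
by case/(dvdn_pfactor _ _ pp) => m _ ->; exists m.
Qed.

Lemma pchar_p : p \in [pchar L].
Proof. by apply: (@card_finPcharP _ _ (h * 3)) => //; rewrite cardL qE expnM. Qed.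

Lemma frobD k (x y : L) : (x + y) ^+ (p ^ k) = x ^+ (p ^ k) + y ^+ (p ^ k).
Proof.
elim: k => // k IH; rewrite !expnSr !exprM IH.
by rewrite -!(pFrobenius_autE pchar_p) rmorphD.
Qed.

Lemma frobN k (x : L) : (- x) ^+ (p ^ k) = - x ^+ (p ^ k).
Proof.
elim: k => // k IH; rewrite !expnSr !exprM IH.
by rewrite -!(pFrobenius_autE pchar_p) rmorphN.
Qed.

Lemma frobB k (x y : L) : (x - y) ^+ (p ^ k) = x ^+ (p ^ k) - y ^+ (p ^ k).
Proof. by rewrite frobD frobN. Qed.

Lemma alpha_neq0 k : alpha ^+ k != 0.
Proof.
apply: expf_neq0; apply/eqP => a0; have := prim_expr_order prim.
rewrite a0 expr0n; have := q_gt1 => q1.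
have -> : ((q ^ 3).-1 == 0)%N = false by apply/negbTE; rewrite -lt0n; nia.
by move/eqP; rewrite eq_sym oner_eq0.
Qed.

Lemma alpha_eq a b : (alpha ^+ a == alpha ^+ b) = (a == b %[mod M]).
Proof. exact: eq_prim_root_expr. Qed.

Lemma nz_pow (x : L) : x != 0 -> exists m, (m < M)%N /\ x = alpha ^+ m.
Proof.
move=> x0; have : x ^+ M = 1.
  apply: (mulfI x0); rewrite -exprS mulr1 /M prednK; first by rewrite -cardL expf_card.
  by rewrite expn_gt0 ltnW ?q_gt1.
by case/(prim_rootP prim) => i ->; exists i.
Qed.

Definition isF (c : L) := c ^+ q == c.

Lemma isF_pow c : isF c -> forall k, c ^+ (q ^ k) = c.
Proof. by move/eqP=> cq; elim=> // k IH; rewrite expnSr exprM IH cq. Qed.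

Lemma isFD c d : isF c -> isF d -> isF (c + d).
Proof. by rewrite /isF qE frobD => /eqP-> /eqP->. Qed.
Lemma isFN c : isF c -> isF (- c).
Proof. by rewrite /isF qE frobN => /eqP->. Qed.
Lemma isFM c d : isF c -> isF d -> isF (c * d).
Proof. by rewrite /isF exprMn => /eqP-> /eqP->. Qed.
Lemma isFV c : isF c -> isF (c^-1).
Proof. by rewrite /isF exprVn => /eqP->. Qed.
Lemma isF1 : isF 1. Proof. by rewrite /isF expr1n. Qed.
Lemma isF0 : isF 0. Proof. by rewrite /isF expr0n; case: q q_gt1. Qed.
Lemma isFX c k : isF c -> isF (c ^+ k).
Proof. by rewrite /isF -exprM mulnC exprM => /eqP->. Qed.

Lemma isF_unit c : isF c -> c != 0 -> c ^+ (q - 1) = 1.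
Proof.
move=> /eqP cq c0; apply: (mulfI c0); rewrite -exprS mulr1 subn1 prednK //.
by have := q_gt1; case: q.
Qed.

Lemma l0 : 0 \in l. Proof. by case: line. Qed.
Lemma lD x y : x \in l -> y \in l -> x + y \in l. Proof. by case: line => _ H _ _; apply: H. Qed.
Lemma lZ c x : isF c -> x \in l -> c * x \in l.
Proof. by case: line => _ _ H _ /eqP; apply: H. Qed.
Lemma lN x : x \in l -> - x \in l.
Proof. by move=> xl; rewrite -mulN1r lZ // isFN ?isF1. Qed.
Lemma lB x y : x \in l -> y \in l -> x - y \in l.
Proof. by move=> xl yl; rewrite lD ?lN. Qed.
Lemma lZE c x : isF c -> c != 0 -> (c * x \in l) = (x \in l).
Proof.
move=> cF c0; apply/idP/idP => [H|]; last exact: lZ.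
by rewrite -(mulKf c0 x) lZ ?isFV.
Qed.

Lemma isF_alphaN k : isF (alpha ^+ (N * k)).
Proof.
rewrite /isF -exprM alpha_eq ME; apply/eqP.
have := q_gt1 => q1.
have -> : (N * k * q = k * (N * (q - 1)) + N * k)%N by nia.
by rewrite modnMDl.
Qed.

Lemma Pper a : (alpha ^+ a \in l) = (alpha ^+ (a %% N) \in l).
Proof.
rewrite {1}(divn_eq a N) exprD mulnC lZE ?isF_alphaN ?alpha_neq0 //.
Qed.


Lemma modNq a b : (a * (q - 1) == b * (q - 1) %[mod M]) = (a == b %[mod N]).
Proof.
have q1 := q_gt1.
by rewrite ME -!muln_modl eqn_pmul2r // subn_gt0.
Qed.

Lemma NP a b c : (a < N)%N -> (b < N)%N -> a != b -> isF c ->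
  alpha ^+ b != c * alpha ^+ a.
Proof.
move=> aN bN ab cF; apply/eqP => E.
have c0 : c != 0 by apply: contraTneq (alpha_neq0 b) => c0; rewrite E c0 mul0r eqxx.
have := congr1 (fun x => x ^+ (q - 1)) E; rewrite /= exprMn (isF_unit cF c0) mul1r.
rewrite -!exprM => /eqP; rewrite alpha_eq modNq !modn_small //.
by move/eqP => ba; rewrite ba eqxx in ab.
Qed.

Lemma cardF : #|[set c : L | isF c]| = q.
Proof.
have q1 := q_gt1.
pose g (k : 'I_(q - 1)) := alpha ^+ (N * k).
have ginj : injective g.
  move=> k1 k2 /eqP; rewrite /g alpha_eq ME -!muln_modr !modn_small //.
  by rewrite eqn_pmul2l ?N_gt0 // => /eqP/val_inj.
have E : [set c : L | isF c] :\ 0 = g @: setT.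
  apply/setP => c; rewrite !inE; apply/andP/imsetP.
    case=> c0 cF; case: (nz_pow c0) => m [mM cE].
    have := isF_unit cF c0; rewrite cE -exprM -(expr0 alpha) => /eqP.
    rewrite alpha_eq => H.
    have : (m * (q - 1) == 0 * (q - 1) %[mod M])%N by rewrite mul0n.
    rewrite modNq mod0n => /eqP mN.
    have mlt : (m %/ N < q - 1)%N by rewrite ltn_divLR ?N_gt0 // mulnC -ME.
    exists (Ordinal mlt) => //; rewrite /g /=; congr (_ ^+ _).
    by rewrite {1}(divn_eq m N) mN addn0 mulnC.
  by case=> k _ ->; rewrite alpha_neq0 isF_alphaN.
have := cardsD1 0 [set c : L | isF c]; rewrite E card_imset // cardsT card_ord.
by rewrite inE isF0 => ->; rewrite add1n subn1 prednK // ltnW.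
Qed.


Lemma card_l : #|l| = (q ^ 2)%N. Proof. by case: line. Qed.

Lemma span a b z : (a < N)%N -> (b < N)%N -> a != b ->
  alpha ^+ a \in l -> alpha ^+ b \in l -> z \in l ->
  exists c1 c2, [/\ isF c1, isF c2 & z = c1 * alpha ^+ a + c2 * alpha ^+ b].
Proof.
move=> aN bN ab al bl zl.
set x := alpha ^+ a; set y := alpha ^+ b.
pose Fs := [set c : L | isF c].
pose f (u : L * L) := u.1 * x + u.2 * y.
have finj : {in setX Fs Fs &, injective f}.
  move=> [c1 c2] [d1 d2]; rewrite !inE /= /f /= => /andP[c1F c2F] /andP[d1F d2F] E.
  have E2 : (c2 - d2) * y = (d1 - c1) * x.
    apply/eqP; rewrite -subr_eq0.
    have -> : (c2 - d2) * y - (d1 - c1) * x = (c1*x + c2*y) - (d1*x + d2*y) by ring.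
    by rewrite E subrr.
  have [c2d2|c2d2] := eqVneq c2 d2.
    move: E2; rewrite c2d2 subrr mul0r => /esym/eqP; rewrite mulf_eq0 (negbTE (alpha_neq0 _)) orbF.
    by rewrite subr_eq0 => /eqP ->.
  have c2d2' : c2 - d2 != 0 by rewrite subr_eq0.
  have : y = ((d1 - c1) / (c2 - d2)) * x.
    by rewrite mulrAC -E2 mulrAC mulfV // mul1r.
  move/eqP; rewrite (negbTE (NP aN bN ab _)) //.
  by rewrite isFM ?isFV ?isFD ?isFN.
have Wsub : f @: setX Fs Fs \subset l.
  apply/subsetP => v /imsetP[[c1 c2]]; rewrite !inE /= => /andP[c1F c2F] ->.
  by rewrite /f lD ?lZ.
have : f @: setX Fs Fs == l.
  by rewrite eqEcard Wsub card_in_imset // cardsX cardF card_l leqnn.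
move/eqP => Wl; move: zl; rewrite -Wl => /imsetP[[c1 c2]]; rewrite !inE /= => /andP[c1F c2F] ->.
by exists c1, c2.
Qed.


Lemma arc_alg m (y z c1 c2 : L) : r = (p ^ m)%N ->
  isF c1 -> isF c2 -> c1 != 0 -> c2 != 0 -> y != 0 -> z != 0 ->
  y ^+ ((r - 1) * (r ^ 3 + 1)) = 1 -> z ^+ ((r - 1) * (r ^ 3 + 1)) = 1 ->
  z = c1 + c2 * y -> isF y.
Proof.
move=> rE c1F c2F c10 c20 y0 z0 yE zE zdef.
have q1 := q_gt1.
have r1 : (0 < r)%N by rewrite lt0n; apply/eqP => r0; move: q1; rewrite qr r0.
set S := (r ^ 3)%N.
have qrr : q = (r * r)%N by rewrite qr.
have frD : forall x1 x2 : L, (x1 + x2) ^+ r = x1 ^+ r + x2 ^+ r by move=> ? ?; rewrite rE frobD.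
have frB : forall x1 x2 : L, (x1 - x2) ^+ r = x1 ^+ r - x2 ^+ r by move=> ? ?; rewrite rE frobB.
have SD : forall x1 x2 : L, (x1 + x2) ^+ S = x1 ^+ S + x2 ^+ S.
  by move=> ? ?; rewrite /S rE -expnM frobD.
have Fs : forall c, isF c -> c ^+ (r * r) = c by move=> c /eqP; rewrite qrr.
have FS : forall c, isF c -> c ^+ S = c ^+ r.
  have e3 : (r ^ 3 = r * r * r)%N by rewrite !expnS expn0 muln1 mulnA.
  by move=> c cF; rewrite /S e3 exprM Fs.
have FsS : forall c, isF c -> (c ^+ r) ^+ S = c.
  have e4 : (r * S = (r * r) * (r * r))%N by rewrite /S !expnS expn0 muln1; ring.
  by move=> c cF; rewrite -exprM e4 exprM !Fs.
have Fs1 : forall c, isF c -> (c ^+ (r + 1)) ^+ r = c ^+ (r + 1).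
  move=> c cF; rewrite -exprM mulnDl mul1n exprD Fs // exprD expr1 mulrC //.
have fix1 : forall x : L, x != 0 -> x ^+ ((r - 1) * (S + 1)) = 1 ->
    (x ^+ (S + 1)) ^+ r = x ^+ (S + 1).
  move=> x x0 xE; have xS0 : x ^+ (S + 1) != 0 by rewrite expf_neq0.
  rewrite -{1}(subnK r1) exprD expr1 -exprM mulnC xE mul1r //.
set lam := y ^+ (S + 1).
set mu := z ^+ (S + 1).
have lamr : lam ^+ r = lam by apply: fix1.
have mur : mu ^+ r = mu by apply: fix1.
set A := c1 ^+ r * c2 * y.
have AS : A ^+ S = c1 * c2 ^+ r * y ^+ S.
  by rewrite /A !exprMn (FsS _ c1F) (FS _ c2F).
have muE : mu = (c1 ^+ r + c2 ^+ r * y ^+ S) * (c1 + c2 * y).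
  by rewrite /mu exprD expr1 zdef SD exprMn (FS _ c1F) (FS _ c2F).
set nu := mu - c1 ^+ (r + 1) - c2 ^+ (r + 1) * lam.
set m0 := c1 ^+ (r + 1) * c2 ^+ (r + 1) * lam.
have sumA : A + A ^+ S = nu.
  rewrite AS /nu muE /lam /A !exprD !expr1; ring.
have prodA : A * A ^+ S = m0.
  rewrite AS /m0 /lam /A !exprD !expr1; ring.
have nur : nu ^+ r = nu by rewrite /nu !frB exprMn lamr mur !Fs1.
have m0r : m0 ^+ r = m0 by rewrite /m0 !exprMn lamr !Fs1.
have ASE : A ^+ S = nu - A by rewrite -sumA; ring.
have quad : A ^+ 2 - nu * A + m0 = 0.
  by rewrite -prodA ASE; ring.
set B := A ^+ r.
have quadB : B ^+ 2 - nu * B + m0 = 0.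
  have gen : forall x a b : L, (x ^+ 2 - a * x + b) ^+ r = (x ^+ r) ^+ 2 - a ^+ r * x ^+ r + b ^+ r.
    by move=> x a b; rewrite frD frB !exprMn.
  have := congr1 (fun x => x ^+ r) quad; rewrite /= gen nur m0r expr0n.
  by rewrite (negbTE (lt0n_neq0 r1)); rewrite /B.
have : (B - A) * (B - (nu - A)) = 0.
  rewrite -quadB -prodA ASE; ring.
move/eqP; rewrite mulf_eq0 !subr_eq0 => BA.
have AF : isF A.
  rewrite /B in BA *; rewrite /isF qrr exprM.
  case/orP: BA => /eqP H; first by rewrite H H.
  by rewrite H frB nur H; apply/eqP; ring.
have -> : y = A / (c1 ^+ r * c2).
  by rewrite /A mulrC mulKf // mulf_neq0 ?expf_neq0.
by rewrite isFM // isFV // isFM // isFX.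
Qed.


Let T := (q + r + 1)%N.
Let E := ((r - 1) * (r ^ 3 + 1))%N.

Lemma ME2 : M = (T * E)%N.
Proof.
have q1 := q_gt1.
have r1 : (1 < r)%N.
  rewrite ltnNge; apply/negP => r1; move: q1; rewrite qr.
  by case: (r) r1 => [|[|]].
rewrite /M /T /E qr; nia.
Qed.

Lemma ratioE a b : a = b %[mod T] -> (alpha ^+ b / alpha ^+ a) ^+ E = 1.
Proof.
move=> ab; rewrite exprMn exprVn -!exprM.
have -> : alpha ^+ (b * E) = alpha ^+ (a * E).
  apply/eqP; rewrite alpha_eq ME2 -!muln_modl ab //.
by rewrite mulfV // alpha_neq0.
Qed.

Lemma arc i j k : (i < N)%N -> (j < N)%N -> (k < N)%N -> i != j -> i != k -> j != k ->
  i = j %[mod T] -> i = k %[mod T] ->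
  alpha ^+ i \in l -> alpha ^+ j \in l -> alpha ^+ k \in l -> False.
Proof.
move=> iN jN kN ij ik jk ijT ikT il jl kl.
have [m rE] := rpow.
have [c1 [c2 [c1F c2F zE]]] := span iN jN ij il jl kl.
have c10 : c1 != 0.
  apply/negP => /eqP c10; move: zE; rewrite c10 mul0r add0r => /eqP.
  by rewrite (negbTE (NP jN kN jk c2F)).
have c20 : c2 != 0.
  apply/negP => /eqP c20; move: zE; rewrite c20 mul0r addr0 => /eqP.
  by rewrite (negbTE (NP iN kN ik c1F)).
have ai0 := alpha_neq0 i.
have yF : isF (alpha ^+ j / alpha ^+ i).
  apply: (@arc_alg m _ (alpha ^+ k / alpha ^+ i) c1 c2) => //.
  - by rewrite mulf_neq0 ?invr_eq0 ?alpha_neq0.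
  - by rewrite mulf_neq0 ?invr_eq0 ?alpha_neq0.
  - exact: ratioE.
  - exact: ratioE.
  by rewrite zE mulrDl -!mulrA mulfV // mulr1.
have := NP iN jN ij yF; rewrite mulfVK // eqxx //.
Qed.


Lemma card_sum (X : finType) (P : pred X) : #|[set x | P x]| = (\sum_x P x)%N.
Proof.
rewrite -sum1_card big_mkcond /=; apply: eq_bigr => x _; rewrite inE.
by case: (P x).
Qed.

Definition Pb (a : nat) : nat := (alpha ^+ a \in l).

Lemma PbE a : Pb a = Pb (a %% N).
Proof. by rewrite /Pb Pper. Qed.

Lemma sum_per k : (\sum_(0 <= m < N * k) Pb m = k * \sum_(0 <= i < N) Pb i)%N.
Proof.
elim: k => [|k IH]; first by rewrite muln0 big_geq.
rewrite mulnS (@big_cat_nat _ _ _ (N * k)) ?leq_addl //= IH.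
have -> : (\sum_(N * k <= i < N + N * k) Pb i = \sum_(0 <= i < N) Pb i)%N.
  rewrite -{1}[(N * k)%N]add0n big_addn addnK.
  apply: eq_bigr => i _; rewrite PbE [in RHS]PbE; congr Pb.
  by rewrite addnC mulnC modnMDl.
by rewrite mulSn addnC.
Qed.

Lemma cardP : (\sum_(i < N) Pb i = q + 1)%N.
Proof.
have q1 := q_gt1.
have E1 : #|l :\ 0| = (q ^ 2 - 1)%N by have := cardsD1 0 l; rewrite l0 card_l => ->; rewrite add1n subn1.
pose g (m : 'I_M) := alpha ^+ m.
have ginj : injective g.
  by move=> a b /eqP; rewrite /g alpha_eq !modn_small // => /eqP/val_inj.
have E2 : g @: [set m : 'I_M | alpha ^+ m \in l] = l :\ 0.
  apply/setP => x; rewrite !inE; apply/imsetP/andP.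
    by case=> m; rewrite inE => ml ->; rewrite alpha_neq0.
  case=> x0 xl; case: (nz_pow x0) => m [mM xE].
  by exists (Ordinal mM); rewrite // inE -xE.
have E3 : #|l :\ 0| = (\sum_(m < M) Pb m)%N.
  by rewrite -E2 card_imset // card_sum.
have : ((q - 1) * \sum_(i < N) Pb i = (q - 1) * (q + 1))%N.
  have S1 : (\sum_(i < N) Pb i = \sum_(0 <= i < N) Pb i)%N by rewrite big_mkord.
  have S2 : (\sum_(m < M) Pb m = \sum_(0 <= m < N * (q - 1)) Pb m)%N by rewrite -ME big_mkord.
  rewrite S1 -sum_per -S2 -E3 E1; nia.
by move/eqP; rewrite eqn_pmul2l ?subn_gt0 // => /eqP.
Qed.


Definition J (e : nat) := (\sum_(i < N) Pb i * Pb (i + e))%N.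

Lemma reidx (G : nat -> nat) i : (\sum_(j < N) G j = \sum_(e < N) G ((i + e) %% N))%N.
Proof.
pose f (e : 'I_N) : 'I_N := Ordinal (ltn_pmod (i + e) N_gt0).
have finj : injective f.
  move=> a b /(congr1 val) /= /eqP; rewrite eqn_modDl !modn_small //.
  by move/eqP/val_inj.
by rewrite (reindex_inj finj).
Qed.

Lemma PbPb a : (Pb a * Pb a = Pb a)%N.
Proof. by rewrite /Pb; case: (_ \in l). Qed.

Lemma J0 : J 0 = (q + 1)%N.
Proof. by rewrite /J -cardP; apply: eq_bigr => i _; rewrite addn0 PbPb. Qed.

Lemma Jsum : (\sum_(e < N) J e = (q + 1) * (q + 1))%N.
Proof.
rewrite /J exchange_big /= -cardP big_distrl /=; apply: eq_bigr => i _.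
rewrite -big_distrr /=; congr (_ * _)%N; rewrite (reidx _ i).
by apply: eq_bigr => e _; rewrite [in LHS]PbE.
Qed.

Lemma Jpos e : (0 < J e)%N.
Proof.
have q1 := q_gt1.
case: (boolP [exists z : L, (z != 0) && (z \in l) && (alpha ^+ e * z \in l)]).
  case/existsP => z /andP[/andP[z0 zl] gzl].
  case: (nz_pow z0) => m [mM zE].
  have iN : (m %% N < N)%N by rewrite ltn_pmod ?N_gt0.
  rewrite /J (bigD1 (Ordinal iN)) //= -PbE.
  have -> : Pb (m %% N + e) = 1%N.
    by rewrite PbE modnDml -PbE /Pb exprD mulrC -zE gzl.
  by rewrite /Pb -zE zl.
rewrite negb_exists => /forallP H.
pose f (u : L * L) := alpha ^+ e * u.1 - u.2.
have finj : {in setX l l &, injective f}.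
  move=> [u1 u2] [v1 v2]; rewrite !inE /= /f /= => /andP[u1l u2l] /andP[v1l v2l] Ef.
  have E2 : alpha ^+ e * (u1 - v1) = u2 - v2.
    apply/eqP; rewrite -subr_eq0.
    have -> : alpha ^+ e * (u1 - v1) - (u2 - v2) = (alpha ^+ e * u1 - u2) - (alpha ^+ e * v1 - v2) by ring.
    by rewrite Ef subrr.
  have := H (u1 - v1); rewrite lB // E2 lB // !andbT negbK subr_eq0 => /eqP uv.
  move: E2; rewrite uv subrr mulr0 => /eqP; rewrite eq_sym subr_eq0 => /eqP ->.
  by [].
have := max_card (mem (f @: setX l l)); rewrite card_in_imset // cardsX card_l cardL.
have : (q ^ 3 < q ^ 2 * q ^ 2)%N by rewrite -expnD ltn_exp2l.
by move=> A B; have := leq_ltn_trans B A; rewrite ltnn.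
Qed.


Lemma J1 e : (0 < e)%N -> (e < N)%N -> J e = 1%N.
Proof.
move=> e0 eN.
pose o := Ordinal N_gt0.
have S1 : (\sum_(x < N | x != o) J x = q * (q + 1))%N.
  have := Jsum; rewrite (bigD1 o) //= J0 => H; apply/eqP; rewrite -(eqn_add2l (q + 1)) H; apply/eqP; ring.
have S2 : (\sum_(x < N | x != o) 1 = q * (q + 1))%N.
  rewrite sum1_card cardC1 card_ord /N; nia.
have : (\sum_(x < N | x != o) (J x - 1) == 0)%N.
  by rewrite sumnB ?S1 ?S2 ?subnn // => x _; exact: Jpos.
rewrite sum_nat_eq0 => /forallP /(_ (Ordinal eN)) /implyP.
have ne : Ordinal eN != o by apply/eqP => /(congr1 val) /= e0'; rewrite e0' in e0.
move/(_ ne); rewrite subn_eq0 => Jle.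
by apply/eqP; rewrite eqn_leq Jle Jpos.
Qed.


Lemma T_gt0 : (0 < T)%N. Proof. by rewrite /T addn1. Qed.

Let d := (q - r + 1)%N.

Lemma NTd : N = (T * d)%N.
Proof.
have q1 := q_gt1.
have r1 : (r <= q)%N by rewrite qr; case: (r) => // r'; rewrite expnS leq_pmulr // expn_gt0.
rewrite /N /T /d qr; rewrite qr in r1; nia.
Qed.

Lemma multcount k : (\sum_(0 <= e < T * k) (T %| e) = k)%N.
Proof.
elim: k => [|k IH]; first by rewrite muln0 big_geq.
rewrite mulnS (@big_cat_nat _ _ _ (T * k)) ?leq_addl //= IH.
have -> : (\sum_(T * k <= i < T + T * k) (T %| i) = \sum_(0 <= i < T) (T %| i))%N.
  rewrite -{1}[(T * k)%N]add0n big_addn addnK.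
  by apply: eq_bigr => i _; rewrite dvdn_addl // dvdn_mulr.
rewrite big_ltn ?T_gt0 // dvdn0 big1_seq ?addn0 ?addn1 //.
move=> i /andP[_]; rewrite mem_index_iota => /andP[i0 iT].
by case: (boolP (T %| i)%N) => // /(dvdn_leq i0); rewrite leqNgt iT.
Qed.

Lemma sel (G : nat -> nat) v : (v < T)%N -> (\sum_(u < T) (v == u) * G u = G v)%N.
Proof.
move=> vT; rewrite (bigD1 (Ordinal vT)) //= eqxx mul1n big1 ?addn0 // => u.
by rewrite eq_sym => /negbTE; rewrite -val_eqE /= => ->.
Qed.

Definition W u := (\sum_(i < N) (i %% T == u) * Pb i)%N.

Lemma sumW : (\sum_(u < T) W u = q + 1)%N.
Proof.
rewrite /W exchange_big /= -cardP; apply: eq_bigr => i _.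
by rewrite (sel (fun _ => Pb i)) // ltn_pmod ?T_gt0.
Qed.

Lemma sumW2 : (\sum_(u < T) W u * W u = (q + 1) + (d - 1))%N.
Proof.
have TN : (T %| N)%N by rewrite NTd dvdn_mulr.
have E1 : forall u, (W u * W u = \sum_(i < N) \sum_(j < N)
    ((i %% T == u) * (Pb i * ((j %% T == u) * Pb j))))%N.
  move=> u; rewrite /W big_distrl /=; apply: eq_bigr => i _.
  by rewrite big_distrr /=; apply: eq_bigr => j _; rewrite -mulnA.
under eq_bigr => u _ do rewrite E1.
rewrite exchange_big /=.
under eq_bigr => i _ do rewrite exchange_big /=.
have E2 : forall i : 'I_N, (\sum_(j < N) \sum_(u < T) (i %% T == u) * (Pb i * ((j %% T == u) * Pb j))
   = Pb i * \sum_(e < N) (T %| e) * Pb (i + e))%N.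
  move=> i.
  rewrite (eq_bigr (fun j : 'I_N => Pb i * ((j %% T == i %% T) * Pb j))%N); last first.
    by move=> j _; rewrite (sel (fun u => Pb i * ((j %% T == u) * Pb j))%N) // ltn_pmod ?T_gt0.
  rewrite -big_distrr /=; congr (_ * _)%N.
  rewrite (reidx (fun j => (j %% T == i %% T) * Pb j)%N i).
  apply: eq_bigr => e _; rewrite -PbE; congr (_ * _)%N.
  by rewrite (modn_dvdm _ TN) -{2}[nat_of_ord i]addn0 eqn_modDl mod0n.
rewrite (eq_bigr _ (fun i _ => E2 i)).
under eq_bigr => i _ do rewrite big_distrr /=.
rewrite exchange_big /=.
have E3 : forall e : 'I_N, (\sum_(i < N) Pb i * ((T %| e) * Pb (i + e)) = (T %| e) * J e)%N.
  move=> e; rewrite /J big_distrr /=; apply: eq_bigr => i _; ring.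
rewrite (eq_bigr _ (fun e _ => E3 e)).
pose o := Ordinal N_gt0.
rewrite (bigD1 o) //= dvdn0 mul1n J0; congr (_ + _)%N.
rewrite (eq_bigr (fun e : 'I_N => (T %| e) : nat)); last first.
  move=> e; rewrite -val_eqE /= => e0; rewrite J1 ?muln1 //.
  by rewrite lt0n.
have := multcount d; rewrite -NTd big_mkord (bigD1 o) //= dvdn0 add1n => <-.
by rewrite subn1.
Qed.


Lemma Wle2 u : (W u <= 2)%N.
Proof.
rewrite leqNgt; apply/negP => W3.
pose A := [set i : 'I_N | ((i %% T)%N == u) && (alpha ^+ i \in l)].
have cA : #|A| = W u.
  rewrite /A card_sum /W; apply: eq_bigr => i _; rewrite /Pb.
  by case: (_ == _); case: (_ \in l).
rewrite -cA in W3.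
have /card_gt0P [i iA] : (0 < #|A|)%N by apply: leq_trans W3.
have /card_gt0P [j jA] : (0 < #|A :\ i|)%N.
  by have := cardsD1 i A; rewrite iA add1n => E0; move: W3; rewrite E0; lia.
have /card_gt0P [k kA] : (0 < #|A :\ i :\ j|)%N.
  have := cardsD1 j (A :\ i); rewrite jA add1n => E0.
  have := cardsD1 i A; rewrite iA add1n => E1.
  by move: W3; rewrite E1 E0; lia.
move: kA jA iA; rewrite !inE => /and3P [kj ki /andP[ku kl]] /andP [ji /andP[ju jl]] /andP[iu il].
apply: (@arc i j k) => //.
- by rewrite eq_sym.
- by rewrite eq_sym.
- by rewrite eq_sym.
- by rewrite (eqP iu) (eqP ju).
- by rewrite (eqP iu) (eqP ku).
Qed.

Lemma fin2 (f : nat -> nat) (s : seq nat) : (forall x, (f x <= 2)%N) ->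
  [/\ size s = (count (fun x => f x == 0) s + count (fun x => f x == 1) s + count (fun x => f x == 2) s)%N,
      (\sum_(x <- s) f x = count (fun x => f x == 1) s + 2 * count (fun x => f x == 2) s)%N
    & (\sum_(x <- s) f x * f x = count (fun x => f x == 1) s + 4 * count (fun x => f x == 2) s)%N].
Proof.
move=> f2; elim: s => [|x s [IH1 IH2 IH3]]; first by rewrite !big_nil.
rewrite /= !big_cons IH1 IH2 IH3.
have := f2 x; case: (f x) => [|[|[|]]] //= _; split; nia.
Qed.

Lemma iotaS (F : nat -> nat) : (\sum_(u <- iota 0 T) F u = \sum_(u < T) F u)%N.
Proof. have E0 := @big_mkord nat 0%N addn T xpredT F; rewrite /index_iota subn0 in E0; exact: E0. Qed.

Lemma main_sec :
  let d := (q - r + 1)%N in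
  let t := ((q ^ 2 + q + 1) %/ d)%N in
  [/\ (d * t = q ^ 2 + q + 1)%N /\ t = (q + r + 1)%N,
      (forall u, (u < t)%N -> (w q alpha l t u <= 2)%N),
      count (fun u => w q alpha l t u == 0)%N (iota 0 t) = ((q + r)./2)%N,
      count (fun u => w q alpha l t u == 1)%N (iota 0 t) = (r + 1)%N
    & count (fun u => w q alpha l t u == 2)%N (iota 0 t) = ((q - r)./2)%N].
Proof.
move=> d0 t.
have d0E : d0 = d by [].
have dpos : (0 < d)%N by rewrite /d addn1.
have tT : t = T by rewrite /t -/N NTd d0E mulnK.
have wW : forall u, w q alpha l t u = W u.
  move=> u; rewrite /w tT card_sum /W; apply: eq_bigr => i _; rewrite /Pb.
  by case: (_ == _); case: (_ \in l).
rewrite !(eq_count (fun u => congr1 (fun x => x == _)%N (wW u))).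
rewrite tT in wW *.
have [c1 c2 c3] := fin2 (iota 0 T) Wle2.
rewrite size_iota in c1; rewrite iotaS sumW in c2; rewrite iotaS sumW2 in c3.
set k0 := count _ _ in c1 *; set k1 := count _ _ in c1 *; set k2 := count _ _ in c1 *.
have q1 := q_gt1.
have r1 : (r <= q)%N by rewrite qr; case: (r) => // r'; rewrite expnS leq_pmulr // expn_gt0.
rewrite /d in c3; rewrite /T in c1.
have e2 : (q - r = k2.*2)%N by rewrite -muln2; lia.
split.
- by split; [rewrite d0E mulnC -NTd | ].
- by move=> u _; rewrite wW Wle2.
- have -> : (q + r = (k2 + r).*2)%N by rewrite doubleD -e2 -addnn; lia.
  rewrite doubleK; rewrite -muln2 in e2; lia.
- rewrite -muln2 in e2; lia.
- by rewrite e2 doubleK.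
Qed.

End P8.

Theorem proposition8 (p h q r : nat) (L : finFieldType) (alpha : L)
  (l : {set L}) :
  prime p -> (0 < h)%N -> q = (p ^ h)%N -> q = (r ^ 2)%N ->
  #|L| = (q ^ 3)%N ->
  ((q ^ 3).-1.-primitive_root alpha)%R ->
  is_line q l -> tau_fixed p l ->
  let d := (q - r + 1)%N in
  let t := ((q ^ 2 + q + 1) %/ d)%N in
  [/\ (d * t = q ^ 2 + q + 1)%N /\ t = (q + r + 1)%N,
      (forall u, (u < t)%N -> (w q alpha l t u <= 2)%N),
      count (fun u => w q alpha l t u == 0)%N (iota 0 t) = ((q + r)./2)%N,
      count (fun u => w q alpha l t u == 1)%N (iota 0 t) = (r + 1)%N
    & count (fun u => w q alpha l t u == 2)%N (iota 0 t) = ((q - r)./2)%N].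
Proof.
move=> pp h0 qE qr cL prim line _.
exact: (main_sec pp h0 qE qr cL prim line).
Qed.
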